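(* For every non-empty context $\Gamma$, every formula $A$ and every non-empty context $\Theta$: (i) $\varphi(\Gamma)\le A$ in the Tamari order if and only if $\Gamma\le A$ (with $A$ viewed as a one-element context) in the substitution order; and (ii) $\psi(A)\le\Theta$ in the substitution order if and only if $A\le\varphi(\Theta)$ in the Tamari order. That is, $\psi\dashv\varphi\dashv i$ form an adjoint triple between the poset of formulas and the poset of non-empty contexts, where $i$ sends $A$ to the one-element context $A$.
   Context: Formulas are built from atoms ($p,q,\dots$) by a binary product: every formula is an atom or $A\bullet B$. A context is a finite (possibly empty) list of formulas; commas denote concatenation. The sequent calculus has exactly four rules (no weakening, contraction or exchange): ($\bullet L$) from $A,B,\Delta\vdash C$ infer $A\bullet B,\Delta\vdash C$ (the product must be leftmost); ($\bullet R$) from $\Gamma\vdash A$ and $\Delta\vdash B$ infer $\Gamma,\Delta\vdash A\bullet B$; ($id$) $A\vdash A$; ($cut$) from $\Theta\vdash A$ and $\Gamma,A,\Delta\vdash B$ infer $\Gamma,\Theta,\Delta\vdash B$; derivable means conclusion of a finite derivation tree with no undischarged premises. The Tamari order $\le$ on formulas is the least preorder with $(A\bullet B)\bullet C\le A\bullet(B\bullet C)$ and $A_1\le A_2$, $B_1\le B_2$ implying $A_1\bullet B_1\le A_2\bullet B_2$. The substitution order on contexts is the least relation $\le$ such that: (1) if $\Gamma\vdash A$ is derivable then $\Gamma\le A$ (one-element context); (2) $\cdot\le\cdot$ for the empty context; (3) if $\Gamma_1\le\Gamma_2$ and $\Theta_1\le\Theta_2$ then $(\Gamma_1,\Theta_1)\le(\Gamma_2,\Theta_2)$.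 $\varphi$ is the left-associated product of a non-empty context: $\varphi(A)=A$, $\varphi(\Gamma,A)=\varphi(\Gamma)\bullet A$. $\psi$ is defined by $\psi(p)=p$ for atoms and $\psi(A\bullet B)=\psi(A),B$. *)

(* Defs.v *)
From Stdlib Require Import List.
Import ListNotations.

Inductive formula : Type :=
| Atom : nat -> formula
| Prod : formula -> formula -> formula.

Definition context := list formula.

Inductive derivable : context -> formula -> Prop :=
| d_prodL : forall A B D C,
    derivable (A :: B :: D) C -> derivable (Prod A B :: D) C
| d_prodR : forall G D A B,
    derivable G A -> derivable D B -> derivable (G ++ D) (Prod A B)
| d_id : forall A, derivable [A] A
| d_cut : forall Th G D A B,
    derivable Th A -> derivable (G ++ A :: D) B -> derivable (G ++ Th ++ D) B.

Inductive tamari : formula -> formula -> Prop :=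
| t_refl : forall A, tamari A A
| t_trans : forall A B C, tamari A B -> tamari B C -> tamari A C
| t_assoc : forall A B C, tamari (Prod (Prod A B) C) (Prod A (Prod B C))
| t_mono : forall A1 A2 B1 B2,
    tamari A1 A2 -> tamari B1 B2 -> tamari (Prod A1 B1) (Prod A2 B2).

Inductive subst_le : context -> context -> Prop :=
| s_der : forall G A, derivable G A -> subst_le G [A]
| s_nil : subst_le [] []
| s_cat : forall G1 G2 T1 T2,
    subst_le G1 G2 -> subst_le T1 T2 -> subst_le (G1 ++ T1) (G2 ++ T2).

(* The value on the empty context is a junk value (never used: phi is
   only applied to non-empty contexts). *)
Definition phi (G : context) : formula :=
  match G with
  | [] => Atom 0
  | A :: G' => fold_left Prod G' A
  end.

Fixpoint psi (A : formula) : context :=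
  match A with
  | Atom p => [Atom p]
  | Prod A B => psi A ++ [B]
  end.

(* Main.v *)
Require Import Defs.
From Stdlib Require Import List.
Import ListNotations.

Lemma fold_mono : forall D X X', tamari X X' ->
  tamari (fold_left Prod D X) (fold_left Prod D X').
Proof. induction D; simpl; intros; auto. apply IHD. apply t_mono; auto. apply t_refl. Qed.

Lemma L1 : forall D X Y, tamari (fold_left Prod D (Prod X Y)) (Prod X (fold_left Prod D Y)).
Proof.
  induction D as [|C D IH]; simpl; intros. apply t_refl.
  eapply t_trans. apply fold_mono. apply t_assoc. apply IH.
Qed.

Lemma L2 : forall Th Z, Th <> [] -> tamari (fold_left Prod Th Z) (Prod Z (phi Th)).
Proof. intros [|C Th] Z H. congruence. simpl. apply L1. Qed.

Lemma seg : forall P Th S X, Th <> [] -> tamari (phi Th) X ->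
  tamari (phi (P ++ Th ++ S)) (phi (P ++ X :: S)).
Proof.
  intros [|Y P] Th S X HT H.
  - destruct Th as [|C Th]. congruence. simpl. rewrite fold_left_app.
    apply fold_mono. exact H.
  - simpl. rewrite !fold_left_app. simpl. apply fold_mono.
    eapply t_trans. apply L2; auto. apply t_mono. apply t_refl. exact H.
Qed.

Lemma der_nonempty : forall G A, derivable G A -> G <> [].
Proof.
  induction 1; try discriminate.
  - destruct G; simpl; [auto | discriminate].
  - destruct G; simpl. destruct Th; simpl; [auto|discriminate]. discriminate.
Qed.

Lemma der_tam : forall G A, derivable G A -> tamari (phi G) A.
Proof.
  induction 1.
  - exact IHderivable.
  - assert (HG := der_nonempty _ _ H). assert (HD := der_nonempty _ _ H0).
    destruct G as [|Y G]. congruence. simpl. rewrite fold_left_app.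
    eapply t_trans. apply L2; auto. apply t_mono; auto.
  - apply t_refl.
  - eapply t_trans; [|exact IHderivable2].
    apply seg; auto. eapply der_nonempty; eauto.
Qed.

Lemma phi_snoc : forall l B, l <> [] -> phi (l ++ [B]) = Prod (phi l) B.
Proof. intros [|Y l] B H. congruence. simpl. rewrite fold_left_app. reflexivity. Qed.

Lemma der_phi : forall G, G <> [] -> derivable G (phi G).
Proof.
  induction G using rev_ind; intros H. congruence.
  destruct G as [|Y G]. simpl. apply d_id.
  rewrite phi_snoc by discriminate. apply d_prodR. apply IHG; discriminate. apply d_id.
Qed.

Lemma tam_der1 : forall A B, tamari A B -> derivable [A] B.
Proof.
  induction 1.
  - apply d_id.
  - change [A] with ([] ++ [A] ++ []). apply d_cut with B; auto.
  - apply (d_prodL (Prod A B) C []). apply (d_prodL A B [C]).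
    apply (d_prodR [A] [B;C]). apply d_id. apply (d_prodR [B] [C]); apply d_id.
  - apply (d_prodL A1 B1 []). apply (d_prodR [A1] [B1]); auto.
Qed.

Lemma tam_der : forall G A, G <> [] -> tamari (phi G) A -> derivable G A.
Proof.
  intros G A HG H. rewrite <- (app_nil_r G) at 1. change (G ++ []) with ([] ++ G ++ []).
  apply d_cut with (phi G). apply der_phi; auto. apply tam_der1; auto.
Qed.

Inductive sl : context -> context -> Prop :=
| sl_nil : sl [] []
| sl_cons : forall G1 G B D, derivable G1 B -> sl G D -> sl (G1 ++ G) (B :: D).

Lemma sl_app : forall G1 D1 G2 D2, sl G1 D1 -> sl G2 D2 -> sl (G1 ++ G2) (D1 ++ D2).
Proof.
  intros G1 D1 G2 D2 H; induction H; intros; simpl; auto.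
  rewrite <- app_assoc. constructor; auto.
Qed.

Lemma subst_sl : forall G D, subst_le G D -> sl G D.
Proof.
  induction 1. rewrite <- (app_nil_r G). constructor; auto. constructor.
  constructor. apply sl_app; auto.
Qed.

Lemma sl_subst : forall G D, sl G D -> subst_le G D.
Proof.
  induction 1. constructor. change (B :: D) with ([B] ++ D). constructor; auto. constructor; auto.
Qed.

Lemma sl_nil_inv : forall G, sl G [] -> G = [].
Proof. intros G H; inversion H; auto. Qed.

Lemma sl_single : forall G A, sl G [A] <-> derivable G A.
Proof.
  split; intros H.
  - inversion H; subst. apply sl_nil_inv in H4; subst. rewrite app_nil_r; auto.
  - rewrite <- (app_nil_r G). constructor; auto. constructor.
Qed.

Lemma sl_tam : forall G D, sl G D -> forall P S,
  tamari (phi (P ++ G ++ S)) (phi (P ++ D ++ S)).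
Proof.
  induction 1; intros P S. apply t_refl.
  apply t_trans with (phi (P ++ B :: G ++ S)).
  - rewrite <- app_assoc. apply seg. eapply der_nonempty; eauto. apply der_tam; auto.
  - specialize (IHsl (P ++ [B]) S). rewrite <- !app_assoc in IHsl. exact IHsl.
Qed.

Lemma psi_ne : forall A, psi A <> [].
Proof. destruct A; simpl. discriminate. intro H. apply app_eq_nil in H. destruct H; discriminate. Qed.

Lemma phi_psi : forall A, phi (psi A) = A.
Proof. induction A; simpl; auto. rewrite phi_snoc by apply psi_ne. congruence. Qed.

Lemma sl_refl : forall D, sl D D.
Proof. induction D. constructor. change (a :: D) with ([a] ++ D). constructor; auto. apply d_id. Qed.

Lemma sl_split : forall D1 D2 G, sl G (D1 ++ D2) ->
  exists G1 G2, G = G1 ++ G2 /\ sl G1 D1 /\ sl G2 D2.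
Proof.
  induction D1; intros D2 G H.
  - exists [], G. repeat split; auto. constructor.
  - simpl in H. inversion H; subst. destruct (IHD1 _ _ H4) as (K1 & K2 & -> & H1 & H2).
    exists (G1 ++ K1), K2. repeat split; auto. apply app_assoc. constructor; auto.
Qed.

Lemma sl_der : forall G D, sl G D -> forall P S E,
  derivable (P ++ D ++ S) E -> derivable (P ++ G ++ S) E.
Proof.
  induction 1; intros P S E H1; simpl in *; auto.
  rewrite <- app_assoc. rewrite app_assoc.
  apply IHsl. rewrite <- app_assoc. apply d_cut with B; auto.
Qed.

Lemma sl_trans : forall D E, sl D E -> forall G, sl G D -> sl G E.
Proof.
  induction 1; intros G' HG.
  - apply sl_nil_inv in HG; subst; constructor.
  - destruct (sl_split _ _ _ HG) as (K1 & K2 & -> & H1 & H2).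
    constructor; auto.
    pose proof (sl_der _ _ H1 [] [] B) as X. simpl in X. rewrite !app_nil_r in X. auto.
Qed.

Lemma psi_mono : forall A B, tamari A B -> sl (psi A) (psi B).
Proof.
  induction 1; simpl.
  - apply sl_refl.
  - eapply sl_trans; eauto.
  - rewrite <- app_assoc. apply sl_app. apply sl_refl.
    apply (sl_cons [B; C] [] (Prod B C) []). apply (d_prodR [B] [C]); apply d_id. constructor.
  - apply sl_app; auto. apply (sl_cons [B1] [] B2 []). apply tam_der1; auto. constructor.
Qed.

Lemma psi_fold : forall Th C, psi (fold_left Prod Th C) = psi C ++ Th.
Proof.
  induction Th; intros; simpl. rewrite app_nil_r; auto.
  rewrite IHTh. simpl. rewrite <- app_assoc. reflexivity.
Qed.

Lemma psi_phi : forall Th, Th <> [] -> sl (psi (phi Th)) Th.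
Proof.
  intros [|C Th] H. congruence. simpl. rewrite psi_fold.
  change (C :: Th) with ([C] ++ Th). apply sl_app; [|apply sl_refl].
  apply sl_single. apply tam_der. apply psi_ne. rewrite phi_psi. apply t_refl.
Qed.

Theorem proposition2p7 :
  forall (G : context) (A : formula) (Th : context),
    G <> [] -> Th <> [] ->
    (tamari (phi G) A <-> subst_le G [A]) /\
    (subst_le (psi A) Th <-> tamari A (phi Th)).
Proof.
  intros G A Th HG HT. split; split; intro H.
  - apply sl_subst. apply sl_single. apply tam_der; auto.
  - apply der_tam. apply sl_single. apply subst_sl; auto.
  - apply subst_sl in H. pose proof (sl_tam _ _ H [] []) as X. simpl in X.
    rewrite !app_nil_r in X. rewrite phi_psi in X. exact X.
  - apply sl_subst. eapply sl_trans. apply psi_phi; auto. apply psi_mono; auto.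
Qed.
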